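(* Let $0<q<1$, $m\in\{0,1,2,\dots\}$ and $0<\lambda<q^m(1-q)^{-1}$. Let $X\sim\mathscr{P}(\lambda;q,m)$ (defined in the context) and consider the random variable $[X]_q=\frac{1-q^X}{1-q}$ (the $q$-deformed number operator $[N]_q$ measured in the generalized coherent state). Then \[ \langle [N]_q\rangle:=\sum_{j\ge0}[j]_q\,p_j(\lambda;q,m)=\lambda+[m]_q, \] \[ \langle([N]_q-\langle[N]_q\rangle)^2\rangle:=\sum_{j\ge0}\big([j]_q-\langle[N]_q\rangle\big)^2p_j(\lambda;q,m)=\lambda^2q^m(1+q-2q^{-m})+\lambda q^m\big(2[m]_q+q^m\big). \]
   Context: The $q$-number is $[a]_q=(1-q^a)/(1-q)$. For $a\in\mathbb{C}$: $(a;q)_0=1$, $(a;q)_n=\prod_{k=0}^{n-1}(1-aq^k)$, $(a;q)_\infty=\prod_{k\ge0}(1-aq^k)$. The Wall polynomial is $P_n(x;a|q)=\sum_{k=0}^n\frac{(q^{-n};q)_k}{(aq;q)_k}\frac{(qx)^k}{(q;q)_k}$. Write $m\wedge j=\min(m,j)$, $m\vee j=\max(m,j)$, $\binom{n}{2}=n(n-1)/2$. For $0<\lambda<q^m/(1-q)$ set $\mathcal{N}_{q,m}(\lambda)=\frac{(q^{1-m}(1-q)\lambda;q)_m}{q^m\,(q^{-m}(1-q)\lambda;q)_\infty}$ and \[ p_j(\lambda;q,m)=\frac{q^{2\binom{m\wedge j}{2}}(1-q)^{|m-j|}\lambda^{|m-j|}}{\mathcal{N}_{q,m}(\lambda)\,q^{mj}(q;q)_j(q;q)_m}\left(\frac{(q;q)_{m\vee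 j}}{(q;q)_{|m-j|}}P_{m\wedge j}\big((1-q)\lambda;q^{|m-j|}\,|\,q\big)\right)^2,\quad j=0,1,2,\dots, \] the probability mass function of the generalized Euler distribution $\mathscr{P}(\lambda;q,m)$ (with $\lambda=z\bar z$). *)

(* Defs.v *)
From Stdlib Require Import Reals Lra Lia.
From Coquelicot Require Import Coquelicot.
Open Scope R_scope.

Definition qnum (q : R) (a : nat) : R := (1 - q ^ a) / (1 - q).

Fixpoint qpoch (a q : R) (n : nat) : R :=
  match n with
  | O => 1
  | S n' => qpoch a q n' * (1 - a * q ^ n')
  end.

Definition qpoch_inf (a q : R) : R := real (Lim_seq (fun n => qpoch a q n)).

Definition binom2 (n : nat) : nat := Nat.div (n * (n - 1)) 2.

Definition absdiff (m j : nat) : nat := (Nat.max m j - Nat.min m j)%nat.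

Definition wall (n : nat) (x a q : R) : R :=
  sum_f_R0 (fun k => qpoch (/ q ^ n) q k / qpoch (a * q) q k
                     * (q * x) ^ k / qpoch q q k) n.

Definition Nqm (q : R) (m : nat) (lam : R) : R :=
  qpoch (q / q ^ m * (1 - q) * lam) q m
  / (q ^ m * qpoch_inf (/ q ^ m * (1 - q) * lam) q).

Definition pj (lam q : R) (m j : nat) : R :=
  let d := absdiff m j in
  let mn := Nat.min m j in
  let mx := Nat.max m j in
  q ^ (2 * binom2 mn) * (1 - q) ^ d * lam ^ d
  / (Nqm q m lam * q ^ (m * j) * qpoch q q j * qpoch q q m)
  * (qpoch q q mx / qpoch q q d * wall mn ((1 - q) * lam) (q ^ d) q) ^ 2.

(* Main.v *)
Require Import Defs.
From Stdlib Require Import Reals Lra Lia.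
From Coquelicot Require Import Coquelicot.
Open Scope R_scope.

Lemma qpoch_add a q n p : qpoch a q (n + p) = qpoch a q n * qpoch (a * q ^ n) q p.
Proof.
  induction p as [|p IH].
  - rewrite Nat.add_0_r; simpl; ring.
  - rewrite Nat.add_succ_r; simpl; rewrite IH, pow_add; ring.
Qed.

Lemma qpoch_S_left a q n : qpoch a q (S n) = (1 - a) * qpoch (a * q) q n.
Proof.
  replace (S n) with (1 + n)%nat by lia. rewrite qpoch_add. simpl. f_equal; ring_simplify; f_equal; ring.
Qed.

Lemma qpoch_zero a q n i : (i < n)%nat -> a * q ^ i = 1 -> qpoch a q n = 0.
Proof.
  intros Hi Ha. replace n with (S i + (n - S i))%nat by lia.
  rewrite qpoch_add. simpl. rewrite Ha. ring.
Qed.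

Lemma qpoch_pos a q n : (forall i, (i < n)%nat -> a * q ^ i < 1) -> 0 < qpoch a q n.
Proof.
  induction n as [|n IH]; intros H; simpl.
  - lra.
  - apply Rmult_lt_0_compat. apply IH; intros; apply H; lia.
    specialize (H n ltac:(lia)); lra.
Qed.


Lemma powS_lt1 q i : 0 < q < 1 -> q ^ (S i) < 1.
Proof. intros Hq. apply (pow_lt_1_compat q (S i)); lia || lra. Qed.

Lemma pow_pos' q i : 0 < q -> 0 < q ^ i.
Proof. intros; apply pow_lt; lra. Qed.

Lemma pow_le1 q n : 0 <= q <= 1 -> q ^ n <= 1.
Proof.
  intros Hq. induction n; simpl. lra.
  assert (0 <= q ^ n) by (apply pow_le; lra). nra.
Qed.

Lemma qf_pos q j : 0 < q < 1 -> 0 < qpoch q q j.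
Proof.
  intros Hq. apply qpoch_pos. intros i _. rewrite tech_pow_Rmult. apply powS_lt1; auto.
Qed.

Lemma is_series_eq (a : nat -> R) l l' : l = l' -> is_series a l -> is_series a l'.
Proof. intros ->; auto. Qed.

Definition Eu q t := Series (fun j => t ^ j / qpoch q q j).

Lemma Eu_ex q t : 0 < q < 1 -> 0 < t < 1 -> ex_series (fun j => t ^ j / qpoch q q j).
Proof.
  intros Hq Ht. apply ex_series_Rabs.
  apply (ex_series_DAlembert _ t). lra.
  - intros n. assert (0 < t ^ n / qpoch q q n).
    { apply Rdiv_lt_0_compat. apply pow_pos'; lra. apply qf_pos; auto. } lra.
  - apply is_lim_seq_ext with (fun n => t / (1 - q * q ^ n)).
    + intros n. simpl. assert (0 < qpoch q q n) by (apply qf_pos; auto).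
      assert (0 < q ^ n) by (apply pow_pos'; lra).
      assert (q * q ^ n < 1) by (rewrite tech_pow_Rmult; apply powS_lt1; auto).
      assert (0 < t ^ n) by (apply pow_pos'; lra).
      rewrite Rabs_pos_eq. field. repeat split; lra.
      apply Rlt_le. apply Rdiv_lt_0_compat.
      apply Rdiv_lt_0_compat. apply Rmult_lt_0_compat; lra. apply Rmult_lt_0_compat; lra.
      apply Rdiv_lt_0_compat; lra.
    + replace (Finite t) with (Rbar_mult t (Rbar_inv (1 - q * 0))).
      2:{ simpl. f_equal. field. }
      apply is_lim_seq_scal_l. apply is_lim_seq_inv.
      apply is_lim_seq_minus'. apply is_lim_seq_const.
      apply is_lim_seq_mult'. apply is_lim_seq_const. apply is_lim_seq_geom.
      rewrite Rabs_pos_eq; lra.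
      simpl. intro H. injection H. lra.
Qed.

Lemma Eu_is q t : 0 < q < 1 -> 0 < t < 1 -> is_series (fun j => t ^ j / qpoch q q j) (Eu q t).
Proof. intros; apply Series_correct, Eu_ex; auto. Qed.

Lemma Eu_func q t : 0 < q < 1 -> 0 < t < 1 -> Eu q (q * t) = (1 - t) * Eu q t.
Proof.
  intros Hq Ht. apply is_series_unique.
  assert (Ha := Eu_is q t Hq Ht).
  assert (Hb : is_series (fun j => t * (t ^ j / qpoch q q j)) (t * Eu q t)).
  { apply (is_series_scal_l t _ _ Ha). }
  assert (Ha' : is_series (fun k => t ^ (S k) / qpoch q q (S k)) (Eu q t - 1)).
  { apply (is_series_incr_1 (fun j => t ^ j / qpoch q q j)).
    unfold plus; simpl. replace (Eu q t - 1 + 1 / 1) with (Eu q t) by field. exact Ha. }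
  clear Ha; rename Ha' into Ha.
  assert (Hc := is_series_minus _ _ _ _ Ha Hb).
  apply is_series_decr_1.
  eapply is_series_eq; [|eapply is_series_ext; [|exact Hc]].
  { unfold plus, opp; simpl. field. }
  intros n; simpl.
  unfold plus, opp; simpl.
  assert (0 < qpoch q q n) by (apply qf_pos; auto).
  assert (q * q ^ n < 1) by (rewrite tech_pow_Rmult; apply powS_lt1; auto).
  rewrite Rpow_mult_distr. field. lra.
Qed.

Lemma Series_zero : Series (fun _ => 0) = 0.
Proof.
  apply is_series_unique.
  assert (H : Rabs (/2) < 1) by (rewrite Rabs_pos_eq; lra).
  eapply is_series_eq; [| eapply is_series_ext; [| apply (is_series_scal_r 0 _ _ (is_series_geom (/2) H))]].
  apply Rmult_0_r. intros n; apply Rmult_0_r.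
Qed.

Lemma Eu_ge1 q u : 0 < q < 1 -> 0 < u < 1 -> 1 <= Eu q u.
Proof.
  intros Hq Hu. assert (Ha := Eu_is q u Hq Hu).
  assert (Hex : ex_series (fun k => u ^ (S k) / qpoch q q (S k))).
  { apply ex_series_incr_1 with (a := fun j => u ^ j / qpoch q q j). eexists; eauto. }
  unfold Eu. rewrite Series_incr_1 by (eexists; eauto). simpl.
  assert (0 <= Series (fun k => u * u ^ k / (qpoch q q k * (1 - q * q ^ k)))).
  { replace 0 with (Series (fun _ => 0)).
    apply Series_le. intros n. split. lra.
    assert (0 < qpoch q q n) by (apply qf_pos; auto).
    assert (q * q ^ n < 1) by (rewrite tech_pow_Rmult; apply powS_lt1; auto).
    assert (0 < u ^ n) by (apply pow_pos'; lra).
    apply Rlt_le, Rdiv_lt_0_compat. apply Rmult_lt_0_compat; lra. apply Rmult_lt_0_compat; lra.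
    exact Hex.
    apply Series_zero. }
  lra.
Qed.

Lemma Eu_split q u : 0 < q < 1 -> 0 < u < 1 ->
  Eu q u = 1 + Series (fun k => u ^ (S k) / qpoch q q (S k)).
Proof.
  intros Hq Hu. unfold Eu. rewrite Series_incr_1 by (apply Eu_ex; auto). simpl. field.
Qed.

Lemma Eu_bound q u t : 0 < q < 1 -> 0 < u <= t -> t < 1 -> Eu q u - 1 <= u / t * (Eu q t - 1).
Proof.
  intros Hq Hu Ht.
  rewrite (Eu_split q u), (Eu_split q t) by (auto; lra).
  assert (Hex : ex_series (fun k => t ^ (S k) / qpoch q q (S k))).
  { apply ex_series_incr_1 with (a := fun j => t ^ j / qpoch q q j). apply Eu_ex; auto; lra. }
  replace (u / t * (1 + Series (fun k => t ^ S k / qpoch q q (S k)) - 1))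
    with (Series (fun k => u / t * (t ^ S k / qpoch q q (S k)))) by (rewrite Series_scal_l; ring).
  cut (Series (fun k => u ^ S k / qpoch q q (S k)) <= Series (fun k => u / t * (t ^ S k / qpoch q q (S k)))). lra.
  apply Series_le.
  - intros n. assert (0 < qpoch q q (S n)) by (apply qf_pos; auto).
    assert (0 < u ^ n) by (apply pow_pos'; lra).
    assert (u ^ n <= t ^ n) by (apply pow_incr; lra).
    split. apply Rlt_le, Rdiv_lt_0_compat; auto. simpl; apply Rmult_lt_0_compat; lra.
    replace (u / t * (t ^ S n / qpoch q q (S n))) with (u * t^n / qpoch q q (S n))
      by (rewrite <- (tech_pow_Rmult t n); field; split; lra).
    simpl. unfold Rdiv. apply Rmult_le_compat_r. apply Rlt_le, Rinv_0_lt_compat; auto.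
    apply Rmult_le_compat_l; lra.
  - eexists. eapply is_series_ext; [|apply (is_series_scal_r (u/t) _ _ (Series_correct _ Hex))].
    intros n; apply Rmult_comm.
Qed.

Lemma Eu_iter q t n : 0 < q < 1 -> 0 < t < 1 -> qpoch t q n * Eu q t = Eu q (t * q ^ n).
Proof.
  intros Hq Ht. induction n as [|n IH].
  - simpl. rewrite Rmult_1_r; ring.
  - simpl. rewrite Rmult_comm, <- Rmult_assoc, (Rmult_comm (Eu q t)), IH.
    assert (0 < t * q ^ n < 1).
    { split. apply Rmult_lt_0_compat. lra. apply pow_pos'; lra.
      assert (q ^ n <= 1) by (apply pow_le1; lra). nra. }
    replace (t * (q * q ^ n)) with (q * (t * q ^ n)) by ring.
    rewrite Eu_func; auto. ring.
Qed.

Lemma qpoch_inf_Eu q t : 0 < q < 1 -> 0 < t < 1 -> qpoch_inf t q = / Eu q t.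
Proof.
  intros Hq Ht. unfold qpoch_inf.
  assert (HE := Eu_ge1 q t Hq Ht).
  assert (Hu : forall n, 0 < t * q ^ n <= t).
  { intros n. assert (0 < q ^ n) by (apply pow_pos'; lra).
    assert (q ^ n <= 1) by (apply pow_le1; lra). split. nra. nra. }
  assert (Hlim : is_lim_seq (fun n => Eu q (t * q ^ n)) 1).
  { apply is_lim_seq_le_le with (u := fun _ => 1) (w := fun n => 1 + q ^ n * (Eu q t - 1)).
    - intros n. split. apply Eu_ge1; auto. specialize (Hu n); lra.
      assert (Hb := Eu_bound q (t * q ^ n) t Hq (Hu n) (proj2 Ht)).
      replace (t * q ^ n / t) with (q ^ n) in Hb by (field; lra). lra.
    - apply is_lim_seq_const.
    - replace (Finite 1) with (Finite (1 + 0 * (Eu q t - 1))) by (f_equal; ring).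
      apply is_lim_seq_plus'. apply is_lim_seq_const.
      apply is_lim_seq_mult'. apply is_lim_seq_geom. rewrite Rabs_pos_eq; lra.
      apply is_lim_seq_const. }
  assert (Hl2 : is_lim_seq (fun n => qpoch t q n) (/ Eu q t)).
  { apply is_lim_seq_ext with (fun n => Eu q (t * q ^ n) * / Eu q t).
    intros n. rewrite <- (Eu_iter q t n Hq Ht). field. lra.
    replace (Finite (/ Eu q t)) with (Finite (1 * / Eu q t)) by (f_equal; ring).
    apply is_lim_seq_mult'. exact Hlim. apply is_lim_seq_const. }
  rewrite (is_lim_seq_unique _ _ Hl2). reflexivity.
Qed.

Fixpoint ec (q : R) (n i : nat) : R :=
  match n with
  | O => match i with O => 1 | S _ => 0 end
  | S n' => match i with O => ec q n' O | S i' => ec q n' (S i') - q ^ n' * ec q n' i' end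
  end.

Lemma ec_0 q n : ec q n 0 = 1.
Proof. induction n; simpl; auto. Qed.

Lemma ec_big q n i : (n < i)%nat -> ec q n i = 0.
Proof.
  revert i; induction n as [|n IH]; intros i Hi.
  - destruct i. lia. reflexivity.
  - destruct i. lia. simpl. rewrite (IH (S i)), (IH i) by lia. ring.
Qed.

Lemma sum_S_left f n : sum_f_R0 f (S n) = f 0%nat + sum_f_R0 (fun i => f (S i)) n.
Proof. rewrite (decomp_sum f (S n)) by lia. reflexivity. Qed.

Lemma sum_ext f g n : (forall i, (i <= n)%nat -> f i = g i) -> sum_f_R0 f n = sum_f_R0 g n.
Proof. apply sum_eq. Qed.

Lemma sum_scal c f n : sum_f_R0 (fun i => c * f i) n = c * sum_f_R0 f n.
Proof. induction n; simpl; [ring|rewrite IHn; ring]. Qed.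

Lemma sum_plus' f g n : sum_f_R0 (fun i => f i + g i) n = sum_f_R0 f n + sum_f_R0 g n.
Proof. induction n; simpl; [ring|rewrite IHn; ring]. Qed.

Lemma sum_minus' f g n : sum_f_R0 (fun i => f i - g i) n = sum_f_R0 f n - sum_f_R0 g n.
Proof. induction n; simpl; [ring|rewrite IHn; ring]. Qed.

Lemma rothe q v n : qpoch v q n = sum_f_R0 (fun i => ec q n i * v ^ i) n.
Proof.
  induction n as [|n IH].
  - simpl. ring.
  - rewrite sum_S_left. simpl qpoch. rewrite IH.
    rewrite ec_0.
    transitivity (sum_f_R0 (fun i => ec q n i * v ^ i) (S n)
                  - q ^ n * v * sum_f_R0 (fun i => ec q n i * v ^ i) n).
    + rewrite tech5. rewrite (ec_big q n (S n)) by lia. ring.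
    + rewrite sum_S_left. rewrite ec_0.
      rewrite <- sum_scal.
      simpl ec.
      rewrite (sum_ext (fun i => (ec q n (S i) - q ^ n * ec q n i) * v ^ S i)
                       (fun i => ec q n (S i) * v ^ S i - q ^ n * v * (ec q n i * v ^ i))).
      rewrite sum_minus'. ring.
      intros i _. simpl. ring.
Qed.

Lemma ec_rho q m k : 0 < q -> ec q m k * qpoch q q k = qpoch (/ q ^ m) q k * (q ^ m) ^ k.
Proof.
  intros Hq. revert k; induction m as [|m IH]; intros k.
  - destruct k. simpl; ring.
    rewrite (qpoch_S_left (/ q ^ 0)). replace (/ q ^ 0) with 1 by (simpl; field). simpl ec. ring.
  - destruct k.
    + simpl. rewrite ec_0. ring.
    + simpl ec.
      assert (0 < q ^ m) by (apply pow_pos'; auto).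
      transitivity (ec q m (S k) * qpoch q q (S k) - q ^ m * (ec q m k * qpoch q q k) * (1 - q * q ^ k)).
      { simpl qpoch. ring. }
      rewrite !IH. rewrite (qpoch_S_left (/ q ^ S m)).
      replace (/ q ^ S m * q) with (/ q ^ m) by (simpl; field; lra).
      simpl. rewrite Rpow_mult_distr. field. lra.
Qed.

Lemma isR_plus (a b : nat -> R) la lb : is_series a la -> is_series b lb -> is_series (fun n => a n + b n) (la + lb).
Proof. intros Ha Hb. exact (is_series_plus _ _ _ _ Ha Hb). Qed.
Lemma isR_scal (a : nat -> R) la c : is_series a la -> is_series (fun n => c * a n) (c * la).
Proof. intros Ha. exact (is_series_scal_l c _ _ Ha). Qed.

Lemma isR_ext (a b : nat -> R) l : (forall n, a n = b n) -> is_series a l -> is_series b l.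
Proof. apply is_series_ext. Qed.

Lemma is_series_sum (a : nat -> nat -> R) (l : nat -> R) n :
  (forall k, (k <= n)%nat -> is_series (a k) (l k)) ->
  is_series (fun j => sum_f_R0 (fun k => a k j) n) (sum_f_R0 l n).
Proof.
  induction n as [|n IH]; intros H.
  - simpl. apply H; lia.
  - simpl. apply isR_plus. apply IH; intros; apply H; lia. apply H; lia.
Qed.

Lemma sum_zero f n : (forall i, (i <= n)%nat -> f i = 0) -> sum_f_R0 f n = 0.
Proof.
  induction n as [|n IH]; intros H; simpl. apply H; lia.
  rewrite IH. rewrite H by lia. ring. intros; apply H; lia.
Qed.

Lemma qpoch_shift_big q r j : 0 < q < 1 -> (r <= j)%nat ->
  qpoch (q ^ j * q / q ^ r) q r * qpoch q q (j - r) = qpoch q q j.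
Proof.
  intros Hq Hrj. replace j with ((j - r) + r)%nat at 3 by lia.
  rewrite qpoch_add. rewrite Rmult_comm. f_equal. f_equal.
  replace j with ((j - r) + r)%nat at 1 by lia. rewrite pow_add.
  assert (0 < q ^ r) by (apply pow_pos'; lra). field. lra.
Qed.

Lemma qpoch_shift_small q r j : 0 < q < 1 -> (j < r)%nat ->
  qpoch (q ^ j * q / q ^ r) q r = 0.
Proof.
  intros Hq Hrj. apply (qpoch_zero _ _ _ (r - S j)). lia.
  assert (0 < q ^ r) by (apply pow_pos'; lra).
  replace r with (S j + (r - S j))%nat at 1 by lia. rewrite pow_add. simpl.
  assert (0 < q ^ j) by (apply pow_pos'; lra). assert (0 < q ^ (r - S j)) by (apply pow_pos'; lra). field. repeat split; lra.
Qed.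

Lemma shifted_euler q r t : 0 < q < 1 -> 0 < t < 1 ->
  is_series (fun j => qpoch (q ^ j * q / q ^ r) q r * t ^ j / qpoch q q j) (t ^ r * Eu q t).
Proof.
  intros Hq Ht. destruct r as [|r].
  - eapply is_series_eq; [|eapply isR_ext;[|apply (Eu_is q t Hq Ht)]].
    simpl; ring. intros n; simpl; field. apply Rgt_not_eq, qf_pos; auto.
  - apply (is_series_decr_n _ (S r)). lia.
    rewrite sum_n_Reals. rewrite sum_zero.
    2:{ intros i Hi. rewrite qpoch_shift_small by (auto; simpl in Hi; lia). unfold Rdiv; ring. }
    eapply is_series_eq; [|eapply isR_ext;[|apply (isR_scal _ _ (t ^ S r) (Eu_is q t Hq Ht))]].
    unfold plus, opp, zero; simpl; ring.
    intros n.
    assert (H1 := qpoch_shift_big q (S r) (S r + n) Hq ltac:(lia)).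
    replace (S r + n - S r)%nat with n in H1 by lia.
    remember (qpoch (q ^ (S r + n) * q / q ^ S r) q (S r)) as P.
    assert (Hn : 0 < qpoch q q n) by (apply qf_pos; auto).
    assert (H2 : 0 < qpoch q q (S r + n)) by (apply qf_pos; auto).
    rewrite <- H1 in H2 |- *.
    assert (HP : P <> 0) by (intro Hz; rewrite Hz in H2; lra).
    rewrite pow_add. field. split; lra.
Qed.

Lemma pow_div a b k : b <> 0 -> (a / b) ^ k = a ^ k / b ^ k.
Proof. intros Hb. induction k; simpl. field. rewrite IHk. field. split; auto. apply pow_nonzero; auto. Qed.

Definition beta q m x k := qpoch (/ q ^ m) q k * (q * x) ^ k / qpoch q q k.
Definition pik q m k y := qpoch (y * q ^ (S k) / q ^ m) q (m - k).
Definition Phi q m x y := sum_f_R0 (fun k => beta q m x k * pik q m k y) m.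

Lemma pik_qj q m k j : 0 < q -> (k <= m)%nat -> pik q m k (q ^ j) = qpoch (q ^ j * q / q ^ (m - k)) q (m - k).
Proof.
  intros Hq Hk. unfold pik. f_equal.
  replace m with (k + (m - k))%nat at 1 by lia. rewrite pow_add. simpl.
  field. split; apply pow_nonzero; lra.
Qed.

Lemma Phi_gf q m x t : 0 < q < 1 -> 0 < t < 1 ->
  is_series (fun j => Phi q m x (q ^ j) * t ^ j / qpoch q q j)
    (sum_f_R0 (fun k => beta q m x k * t ^ (m - k)) m * Eu q t).
Proof.
  intros Hq Ht.
  eapply is_series_eq; [| eapply isR_ext; [| apply (is_series_sum
     (fun k j => beta q m x k * (qpoch (q ^ j * q / q ^ (m - k)) q (m - k) * t ^ j / qpoch q q j))
     (fun k => beta q m x k * (t ^ (m - k) * Eu q t)) m)]].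
  - rewrite <- (Rmult_comm (Eu q t)), <- sum_scal. apply sum_ext. intros; ring.
  - intros j. unfold Phi. symmetry.
    transitivity ((t ^ j / qpoch q q j) * sum_f_R0 (fun k => beta q m x k * pik q m k (q ^ j)) m).
    unfold Rdiv; ring. rewrite <- sum_scal. apply sum_ext. intros k Hk.
    rewrite pik_qj by (lra || lia). unfold Rdiv; ring.
  - intros k Hk. apply isR_scal. apply shifted_euler; auto.
Qed.

Lemma beta_ec q m x k : 0 < q < 1 -> beta q m x k = ec q m k * (q * x / q ^ m) ^ k.
Proof.
  intros Hq. unfold beta.
  assert (H := ec_rho q m k (proj1 Hq)).
  assert (0 < qpoch q q k) by (apply qf_pos; auto).
  assert (0 < q ^ m) by (apply pow_pos'; lra).
  rewrite pow_div by lra.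
  assert ((q ^ m) ^ k <> 0) by (apply pow_nonzero; lra).
  replace (qpoch (/ q ^ m) q k) with (ec q m k * qpoch q q k / (q ^ m) ^ k) by (rewrite H; field; auto).
  field. split; lra.
Qed.

Lemma Gam_closed q m x t : 0 < q < 1 -> t <> 0 ->
  sum_f_R0 (fun k => beta q m x k * t ^ (m - k)) m = t ^ m * qpoch (q * x / (q ^ m * t)) q m.
Proof.
  intros Hq Ht. rewrite rothe, <- sum_scal. apply sum_ext. intros k Hk.
  rewrite beta_ec by auto.
  assert (0 < q ^ m) by (apply pow_pos'; lra).
  assert (Htm : t ^ m = t ^ (m - k) * t ^ k) by (rewrite <- pow_add; f_equal; lia).
  rewrite Htm.
  assert (q ^ m * t <> 0) by (apply Rmult_integral_contrapositive; split; lra).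
  rewrite !pow_div by lra. rewrite !Rpow_mult_distr.
  assert ((q ^ m) ^ k <> 0) by (apply pow_nonzero; lra).
  assert (t ^ k <> 0) by (apply pow_nonzero; lra).
  field. split; auto.
Qed.

Lemma sum_extend f n p : (forall i, (n < i)%nat -> f i = 0) -> sum_f_R0 f n = sum_f_R0 f (n + p).
Proof.
  intros H. induction p as [|p IH]. rewrite Nat.add_0_r; auto.
  rewrite Nat.add_succ_r. simpl. rewrite <- IH, H by lia. ring.
Qed.

Lemma sum_swap (a : nat -> nat -> R) M N :
  sum_f_R0 (fun k => sum_f_R0 (fun i => a k i) N) M = sum_f_R0 (fun i => sum_f_R0 (fun k => a k i) M) N.
Proof.
  induction M as [|M IH]; simpl. reflexivity.
  rewrite IH, <- sum_plus'. reflexivity.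
Qed.

Definition fc q m x i := sum_f_R0 (fun k => beta q m x k * (ec q (m - k) i * (q ^ (S k) / q ^ m) ^ i)) m.

Lemma Phi_poly q m x y : Phi q m x y = sum_f_R0 (fun i => fc q m x i * y ^ i) m.
Proof.
  unfold Phi, fc.
  transitivity (sum_f_R0 (fun k => sum_f_R0 (fun i => beta q m x k * (ec q (m - k) i * (q ^ S k / q ^ m) ^ i) * y ^ i) m) m).
  - apply sum_ext. intros k Hk. unfold pik. rewrite rothe.
    rewrite (sum_extend _ (m - k) k).
    replace (m - k + k)%nat with m by lia.
    rewrite <- sum_scal. apply sum_ext. intros i _.
    replace (y * q ^ S k / q ^ m) with (y * (q ^ S k / q ^ m)) by (unfold Rdiv; ring).
    rewrite Rpow_mult_distr. ring.
    intros i Hi. rewrite ec_big by lia. ring.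
  - rewrite sum_swap. apply sum_ext. intros i _. rewrite Rmult_comm, <- sum_scal.
    apply sum_ext. intros; ring.
Qed.

Definition Gm q m x t := sum_f_R0 (fun k => beta q m x k * t ^ (m - k)) m.
Definition Mo q m x s n := Gm q m x (s * q ^ n) * Eu q (s * q ^ n).

Lemma moment q m x s p : 0 < q < 1 -> 0 < s < 1 ->
  is_series (fun j => (q ^ p) ^ j * Phi q m x (q ^ j) ^ 2 * s ^ j / qpoch q q j)
    (sum_f_R0 (fun i => fc q m x i * Mo q m x s (p + i)) m).
Proof.
  intros Hq Hs.
  eapply isR_ext; [| apply (is_series_sum
     (fun i j => fc q m x i * (Phi q m x (q ^ j) * (s * q ^ (p + i)) ^ j / qpoch q q j))
     (fun i => fc q m x i * Mo q m x s (p + i)) m)].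
  - intros j. symmetry.
    transitivity ((Phi q m x (q ^ j) * s ^ j * (q ^ p) ^ j / qpoch q q j) * sum_f_R0 (fun i => fc q m x i * (q ^ j) ^ i) m).
    + rewrite <- Phi_poly. simpl. unfold Rdiv; ring.
    + rewrite <- sum_scal. apply sum_ext. intros i _.
      rewrite !Rpow_mult_distr, pow_add, Rpow_mult_distr.
      rewrite <- !pow_mult, (Nat.mul_comm i j). unfold Rdiv. ring.
  - intros i Hi. apply isR_scal. unfold Mo. apply Phi_gf. auto.
    assert (0 < q ^ (p + i) <= 1) by (split; [apply pow_pos'; lra | apply pow_le1; lra]).
    split; nra.
Qed.

Lemma sum_first g n : (forall i, (0 < i <= n)%nat -> g i = 0) -> sum_f_R0 g n = g 0%nat.
Proof.
  intros H. destruct n. reflexivity. rewrite sum_S_left. rewrite sum_zero. ring.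
  intros i Hi. apply H; lia.
Qed.

Lemma sum_last g n : (forall i, (i < n)%nat -> g i = 0) -> sum_f_R0 g n = g n.
Proof.
  intros H. destruct n. reflexivity. simpl. rewrite sum_zero. ring.
  intros i Hi. apply H; lia.
Qed.

Lemma sum_last2 g n : (forall i, (i < n)%nat -> g i = 0) -> sum_f_R0 g (S n) = g n + g (S n).
Proof.
  intros H. simpl. rewrite sum_last by auto. ring.
Qed.

Lemma beta0 q m x : beta q m x 0 = 1.
Proof. unfold beta. simpl. field. Qed.

Lemma fc_top q m x : 0 < q < 1 -> fc q m x m = ec q m m * (q / q ^ m) ^ m.
Proof.
  intros Hq. unfold fc. rewrite sum_first.
  - rewrite beta0, Nat.sub_0_r. replace (q ^ 1) with q by ring. ring.
  - intros i Hi. rewrite ec_big by lia. ring.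
Qed.

Lemma fc_sub q m x : 0 < q < 1 ->
  fc q (S m) x m = ec q (S m) m * (q / q ^ S m) ^ m + beta q (S m) x 1 * ec q m m * (q ^ 2 / q ^ S m) ^ m.
Proof.
  intros Hq. unfold fc. rewrite sum_S_left. rewrite sum_first.
  - rewrite beta0, Nat.sub_0_r. replace (q ^ 1) with q by ring.
    replace (S m - 1)%nat with m by lia. ring.
  - intros i Hi. rewrite ec_big by lia. ring.
Qed.

Lemma fc_zero q m x : 0 < q < 1 -> fc q m x 0 = Gm q m x 1.
Proof.
  intros Hq. unfold fc, Gm. apply sum_ext. intros k _. rewrite ec_0, pow1. simpl. ring.
Qed.

Lemma ec_diag q n : ec q (S n) (S n) = - q ^ n * ec q n n.
Proof. simpl. rewrite (ec_big q n (S n)) by lia. ring. Qed.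

Lemma ec_sub q n : 0 < q < 1 -> ec q (S n) n * q ^ n = - qnum q (S n) * ec q (S n) (S n).
Proof.
  intros Hq. unfold qnum. induction n as [|n IH].
  - simpl. field. lra.
  - assert (E1 : ec q (S (S n)) (S n) = ec q (S n) (S n) - q ^ (S n) * ec q (S n) n) by reflexivity.
    rewrite E1, (ec_diag q (S n)). rewrite (ec_diag q n) in *.
    replace ((- q ^ n * ec q n n - q ^ S n * ec q (S n) n) * q ^ S n)
      with (- q ^ n * ec q n n * q ^ S n - q * q * (ec q (S n) n * q ^ n) * q ^ n) by (simpl; ring).
    rewrite IH. simpl. field. lra.
Qed.

Lemma binom2_S n : binom2 (S n) = (binom2 n + n)%nat.
Proof.
  unfold binom2. replace (S n * (S n - 1))%nat with (n * (n - 1) + n * 2)%nat.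
  apply Nat.div_add. lia.
  destruct n; simpl; lia.
Qed.

Lemma binom2_twice n : (2 * binom2 n + n = n * n)%nat.
Proof.
  induction n as [|n IH]. reflexivity. rewrite binom2_S. lia.
Qed.

Lemma Kq q j d : 0 < q < 1 ->
  qpoch (/ q ^ (j + d)) q d * q ^ d * q ^ (binom2 (j + d)) * qpoch q q j
  = (-1) ^ d * q ^ (binom2 j) * qpoch q q (j + d).
Proof.
  intros Hq. induction d as [|d IH].
  - rewrite Nat.add_0_r. simpl. ring.
  - rewrite qpoch_S_left. rewrite Nat.add_succ_r.
    replace (/ q ^ S (j + d) * q) with (/ q ^ (j + d)) by (simpl; field; split; [apply pow_nonzero|]; lra).
    rewrite binom2_S. rewrite (pow_add q (binom2 (j + d)) (j + d)).
    change (qpoch q q (S (j + d))) with (qpoch q q (j + d) * (1 - q * q ^ (j + d))).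
    change (q ^ S d) with (q * q ^ d). change ((-1) ^ S d) with (-1 * (-1) ^ d).
    change (q ^ S (j + d)) with (q * q ^ (j + d)).
    assert (0 < q ^ (j + d)) by (apply pow_pos'; lra).
    replace ((1 - / (q * q ^ (j + d))) * qpoch (/ q ^ (j + d)) q d * (q * q ^ d) *
       (q ^ binom2 (j + d) * q ^ (j + d)) * qpoch q q j)
      with ((qpoch (/ q ^ (j + d)) q d * q ^ d * q ^ binom2 (j + d) * qpoch q q j) * (q ^ (j + d) * q - 1))
      by (field; lra).
    rewrite IH. ring.
Qed.

Lemma Gm_vanish q m x n : 0 < q < 1 -> 0 < x -> (1 <= n <= m)%nat ->
  Gm q m x (x / q ^ m * q ^ n) = 0.
Proof.
  intros Hq Hx Hn. unfold Gm.
  assert (0 < q ^ m) by (apply pow_pos'; lra).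
  assert (0 < q ^ n) by (apply pow_pos'; lra).
  assert (0 < q ^ (n - 1)) by (apply pow_pos'; lra).
  rewrite Gam_closed by (auto; apply Rgt_not_eq; apply Rmult_lt_0_compat; auto; apply Rdiv_lt_0_compat; auto).
  rewrite (qpoch_zero _ _ _ (n - 1)). ring. lia.
  assert (Hqn : q ^ n = q * q ^ (n - 1)) by (destruct n; [lia | simpl; rewrite Nat.sub_0_r; reflexivity]).
  rewrite Hqn in *. field. repeat split; lra.
Qed.

Lemma L0_eval q m x : 0 < q < 1 -> 0 < x ->
  sum_f_R0 (fun i => fc q m x i * Mo q m x (x / q ^ m) (0 + i)) m = fc q m x 0 * Mo q m x (x / q ^ m) 0.
Proof.
  intros Hq Hx. apply sum_first. intros i Hi. unfold Mo. simpl.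
  rewrite Gm_vanish by (auto; lia). ring.
Qed.

Lemma L1_eval q m x : 0 < q < 1 -> 0 < x ->
  sum_f_R0 (fun i => fc q m x i * Mo q m x (x / q ^ m) (1 + i)) m = fc q m x m * Mo q m x (x / q ^ m) (1 + m).
Proof.
  intros Hq Hx. apply sum_last. intros i Hi. unfold Mo.
  rewrite Gm_vanish by (auto; lia). ring.
Qed.

Lemma L2_eval q m x : 0 < q < 1 -> 0 < x ->
  sum_f_R0 (fun i => fc q (S m) x i * Mo q (S m) x (x / q ^ S m) (2 + i)) (S m) =
  fc q (S m) x m * Mo q (S m) x (x / q ^ S m) (2 + m) + fc q (S m) x (S m) * Mo q (S m) x (x / q ^ S m) (2 + S m).
Proof.
  intros Hq Hx. apply sum_last2. intros i Hi. unfold Mo.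
  rewrite Gm_vanish by (auto; lia). ring.
Qed.

Lemma sum_reindex a d j : (forall k, (k < d)%nat -> a k = 0) ->
  sum_f_R0 a (d + j) = sum_f_R0 (fun k => a (d + k)%nat) j.
Proof.
  intros H. induction j as [|j IH].
  - rewrite Nat.add_0_r. destruct d. reflexivity.
    simpl. rewrite sum_zero. rewrite Nat.add_0_r. ring. intros; apply H; lia.
  - rewrite Nat.add_succ_r. simpl. rewrite IH. rewrite Nat.add_succ_r. reflexivity.
Qed.

Lemma qf_nz q j : 0 < q < 1 -> qpoch q q j <> 0.
Proof. intros; apply Rgt_not_eq, qf_pos; auto. Qed.

Lemma qpoch_up_pos q d k : 0 < q < 1 -> 0 < qpoch (q * q ^ d) q k.
Proof.
  intros Hq. apply qpoch_pos. intros i _. rewrite Rmult_assoc, <- pow_add.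
  rewrite tech_pow_Rmult. apply powS_lt1; auto.
Qed.

Lemma wall_big q m x j : 0 < q < 1 -> (m <= j)%nat ->
  qpoch q q j / qpoch q q (j - m) * wall m x (q ^ (j - m)) q = Phi q m x (q ^ j).
Proof.
  intros Hq Hmj. set (d := (j - m)%nat). assert (Hj : j = (d + m)%nat) by (unfold d; lia).
  unfold wall, Phi. rewrite <- sum_scal. apply sum_ext. intros k Hk.
  unfold beta, pik.
  assert (E1 : qpoch q q j = qpoch q q d * qpoch (q * q ^ d) q k * qpoch (q ^ j * q ^ S k / q ^ m) q (m - k)).
  { rewrite Hj. replace (d + m)%nat with ((d + k) + (m - k))%nat by lia.
    rewrite !qpoch_add. f_equal. f_equal. rewrite pow_add.
    assert (0 < q ^ m) by (apply pow_pos'; lra). simpl.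
    replace m with (k + (m - k))%nat at 2 by lia. rewrite !pow_add. field.
    split; apply pow_nonzero; lra. }
  rewrite E1. rewrite (Rmult_comm (q ^ d) q).
  assert (0 < qpoch (q * q ^ d) q k) by (apply qpoch_up_pos; auto).
  assert (qpoch q q d <> 0) by (apply qf_nz; auto).
  assert (qpoch q q k <> 0) by (apply qf_nz; auto).
  field. repeat split; lra.
Qed.

Lemma wall_small q m x j : 0 < q < 1 -> (j < m)%nat ->
  Phi q m x (q ^ j) = qpoch (/ q ^ m) q (m - j) * (q * x) ^ (m - j) * qpoch q q j / qpoch q q (m - j)
                      * wall j x (q ^ (m - j)) q.
Proof.
  intros Hq Hjm. set (d := (m - j)%nat). assert (Hm : m = (d + j)%nat) by (unfold d; lia).
  assert (Hqm : 0 < q ^ m) by (apply pow_pos'; lra).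
  unfold Phi.
  assert (Hs : forall f, sum_f_R0 f m = sum_f_R0 f (d + j)) by (intros; rewrite <- Hm; auto).
  rewrite (Hs (fun k => beta q m x k * pik q m k (q ^ j))). rewrite sum_reindex.
  - unfold wall. rewrite <- sum_scal. apply sum_ext. intros k Hk.
    unfold beta, pik.
    assert (E1 : qpoch (/ q ^ m) q (d + k) = qpoch (/ q ^ m) q d * qpoch (/ q ^ j) q k).
    { rewrite qpoch_add. f_equal. f_equal. rewrite Hm, pow_add. field. split; apply pow_nonzero; lra. }
    assert (E2 : qpoch q q (d + k) = qpoch q q d * qpoch (q ^ d * q) q k).
    { rewrite qpoch_add. f_equal. f_equal. ring. }
    assert (E3 : qpoch q q j = qpoch q q k * qpoch (q ^ j * q ^ S (d + k) / q ^ m) q (m - (d + k))).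
    { replace (m - (d + k))%nat with (j - k)%nat by lia.
      replace j with (k + (j - k))%nat at 1 by lia. rewrite qpoch_add. f_equal. f_equal.
      rewrite Hm. rewrite !pow_add. simpl. rewrite !pow_add.
      field. repeat split; apply pow_nonzero; lra. }
    rewrite E1, E2, E3, pow_add.
    assert (0 < qpoch (q ^ d * q) q k) by (rewrite Rmult_comm; apply qpoch_up_pos; auto).
    assert (qpoch q q d <> 0) by (apply qf_nz; auto).
    assert (qpoch q q k <> 0) by (apply qf_nz; auto).
    field. repeat split; lra.
  - intros k Hk. unfold pik. rewrite (qpoch_zero _ _ _ (d - 1 - k)). ring. lia.
    assert (Hd : q ^ d = q ^ S k * q ^ (d - 1 - k)) by (rewrite <- pow_add; f_equal; lia).
    rewrite Hm, pow_add, Hd.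
    assert (q ^ S k <> 0) by (apply pow_nonzero; lra).
    assert (q ^ (d - 1 - k) <> 0) by (apply pow_nonzero; lra).
    assert (q ^ j <> 0) by (apply pow_nonzero; lra).
    field. repeat split; auto.
Qed.

Lemma sign_cases d : (-1) ^ d = 1 \/ (-1) ^ d = -1.
Proof. induction d; simpl. auto. destruct IHd as [-> | ->]; [right|left]; ring. Qed.

Lemma pj_form lam q m j : 0 < q < 1 -> 0 < lam -> Nqm q m lam <> 0 ->
  pj lam q m j = q ^ (2 * binom2 m) / (Nqm q m lam * ((1 - q) * lam) ^ m * qpoch q q m) *
   (((1 - q) * lam / q ^ m) ^ j * Phi q m ((1 - q) * lam) (q ^ j) ^ 2 / qpoch q q j).
Proof.
  intros Hq Hl HN. unfold pj. cbv zeta. unfold absdiff.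
  set (x := (1 - q) * lam).
  assert (Hx : 0 < x) by (unfold x; apply Rmult_lt_0_compat; lra).
  assert (Hqm : 0 < q ^ m) by (apply pow_pos'; lra).
  assert (Hqfm := qf_nz q m Hq). assert (Hqfj := qf_nz q j Hq).
  destruct (Compare_dec.le_lt_dec m j) as [Hmj | Hjm].
  - rewrite Nat.max_r, Nat.min_l by lia.
    rewrite wall_big by auto.
    replace (q ^ (2 * binom2 m) * (1 - q) ^ (j - m) * lam ^ (j - m)) with (q ^ (2 * binom2 m) * x ^ (j - m))
      by (unfold x; rewrite Rpow_mult_distr; ring).
    assert (Hxj : x ^ j = x ^ (j - m) * x ^ m) by (rewrite <- pow_add; f_equal; lia).
    rewrite pow_div by lra. rewrite Hxj, (pow_mult q m j).
    assert (x ^ (j - m) <> 0) by (apply pow_nonzero; lra).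
    assert (x ^ m <> 0) by (apply pow_nonzero; lra).
    assert ((q ^ m) ^ j <> 0) by (apply pow_nonzero; lra).
    field. repeat split; auto.
  - rewrite Nat.max_l, Nat.min_r by lia.
    replace (q ^ (2 * binom2 j) * (1 - q) ^ (m - j) * lam ^ (m - j)) with (q ^ (2 * binom2 j) * x ^ (m - j)) by (unfold x; rewrite Rpow_mult_distr; ring).
    set (d := (m - j)%nat). assert (Hm : m = (j + d)%nat) by (unfold d; lia).
    assert (HK := Kq q j d Hq). rewrite <- Hm in HK.
    set (P := qpoch (/ q ^ m) q d) in *.
    assert (Hqd : q ^ d <> 0) by (apply pow_nonzero; lra).
    assert (Hbm : q ^ binom2 m <> 0) by (apply pow_nonzero; lra).
    assert (Hbj : q ^ binom2 j <> 0) by (apply pow_nonzero; lra).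
    assert (Hqfd := qf_nz q d Hq).
    assert (Hsg : (-1) ^ d <> 0) by (apply pow_nonzero; lra).
    assert (HP : P = (-1) ^ d * q ^ binom2 j * qpoch q q m / (q ^ d * q ^ binom2 m * qpoch q q j)).
    { rewrite <- HK. field. repeat split; auto. }
    assert (HPnz : P <> 0).
    { intro H0. rewrite H0, !Rmult_0_l in HK. symmetry in HK. apply Rmult_integral in HK.
      destruct HK as [HK|HK]; [apply Rmult_integral in HK; destruct HK|]; auto. }
    assert (Hxd : x ^ d <> 0) by (apply pow_nonzero; lra).
    assert (Hqxd : (q * x) ^ d <> 0) by (apply pow_nonzero; apply Rmult_integral_contrapositive; split; lra).
    replace (wall j x (q ^ d) q) with
      (Phi q m x (q ^ j) / (P * (q * x) ^ d * qpoch q q j / qpoch q q d)).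
    2:{ rewrite wall_small by (auto; lia). fold d. fold P. field. repeat split; auto. }
    rewrite HP.
    assert (Hxm : x ^ m = x ^ j * x ^ d) by (rewrite Hm, pow_add; auto).
    rewrite pow_div by lra. rewrite Hxm, (pow_mult q m j).
    replace (2 * binom2 m)%nat with (binom2 m + binom2 m)%nat by lia.
    replace (2 * binom2 j)%nat with (binom2 j + binom2 j)%nat by lia.
    rewrite !pow_add, !Rpow_mult_distr.
    assert (x ^ j <> 0) by (apply pow_nonzero; lra).
    assert ((q ^ m) ^ j <> 0) by (apply pow_nonzero; lra).
    destruct (sign_cases d) as [Hs | Hs]; rewrite Hs; field; repeat split; auto.
Qed.

Lemma s_bounds q m x n : 0 < q < 1 -> 0 < x < q ^ m -> 0 < x / q ^ m * q ^ n < 1.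
Proof.
  intros Hq Hx. assert (0 < q ^ m) by (apply pow_pos'; lra).
  assert (0 < q ^ n <= 1) by (split; [apply pow_pos'; lra | apply pow_le1; lra]).
  assert (x / q ^ m < 1) by (apply (Rmult_lt_reg_r (q ^ m)); auto; field_simplify; lra).
  assert (0 < x / q ^ m) by (apply Rdiv_lt_0_compat; lra).
  split; nra.
Qed.

Lemma Gm_at q m x n : 0 < q < 1 -> 0 < x ->
  Gm q m x (x / q ^ m * q ^ n) = (x / q ^ m * q ^ n) ^ m * qpoch (q / q ^ n) q m.
Proof.
  intros Hq Hx. unfold Gm.
  assert (0 < q ^ m) by (apply pow_pos'; lra). assert (0 < q ^ n) by (apply pow_pos'; lra).
  rewrite Gam_closed; auto. f_equal. f_equal. field. repeat split; lra.
  apply Rgt_not_eq. apply Rmult_lt_0_compat; auto. apply Rdiv_lt_0_compat; auto.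
Qed.

Lemma F0_val q m x : 0 < q < 1 -> 0 < x -> fc q m x 0 = qpoch (q * x / q ^ m) q m.
Proof.
  intros Hq Hx. rewrite fc_zero by auto. unfold Gm. rewrite Gam_closed by (auto; lra).
  rewrite pow1, Rmult_1_r. ring.
Qed.

Lemma Pm_val q m : 0 < q < 1 -> qpoch (/ q ^ m) q m = (-1) ^ m * qpoch q q m / (q ^ m * q ^ binom2 m).
Proof.
  intros Hq. assert (H := Kq q 0 m Hq).
  change (qpoch q q 0) with 1 in H. change (binom2 0) with 0%nat in H. change (0 + m)%nat with m in H.
  assert (q ^ m <> 0) by (apply pow_nonzero; lra).
  assert (q ^ binom2 m <> 0) by (apply pow_nonzero; lra).
  apply (Rmult_eq_reg_r (q ^ m * q ^ binom2 m)).
  2: apply Rmult_integral_contrapositive; split; auto.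
  transitivity (qpoch (/ q ^ m) q m * q ^ m * q ^ binom2 m * 1). ring. rewrite H. simpl. field. split; auto.
Qed.

Lemma sq_sign m : (-1) ^ m * (-1) ^ m = 1.
Proof. destruct (sign_cases m) as [-> | ->]; ring. Qed.

Lemma Qm_val q m : (q ^ m) ^ m = q ^ binom2 m * q ^ binom2 m * q ^ m.
Proof. rewrite <- pow_mult, <- !pow_add. f_equal. pose proof (binom2_twice m). lia. Qed.

Lemma F0_pos q m x : 0 < q < 1 -> 0 < x < q ^ m -> 0 < qpoch (q * x / q ^ m) q m.
Proof.
  intros Hq Hx. apply qpoch_pos. intros i _.
  assert (H := s_bounds q m x (S i) Hq Hx). simpl in H.
  replace (q * x / q ^ m * q ^ i) with (x / q ^ m * (q * q ^ i)) by (field; apply pow_nonzero; lra). lra.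
Qed.

Lemma Es_rel q m x : 0 < q < 1 -> 0 < x < q ^ m ->
  Eu q (x / q ^ m) * ((1 - x / q ^ m) * qpoch (q * x / q ^ m) q m) = Eu q (x / q ^ m * q ^ (S m)).
Proof.
  intros Hq Hx. assert (Hs := s_bounds q m x 0 Hq Hx). simpl in Hs. rewrite Rmult_1_r in Hs.
  rewrite <- Eu_iter by auto. rewrite qpoch_S_left.
  replace (x / q ^ m * q) with (q * x / q ^ m) by (field; apply pow_nonzero; lra). ring.
Qed.

Lemma K1 q m x : 0 < q < 1 -> 0 < x < q ^ m ->
  fc q m x m * Mo q m x (x / q ^ m) (1 + m) = (q ^ m - x) * (fc q m x 0 * Mo q m x (x / q ^ m) 0).
Proof.
  intros Hq Hx. unfold Mo.
  rewrite fc_top, F0_val by (auto; lra). rewrite !Gm_at by (auto; lra).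
  assert (HE := Es_rel q m x Hq Hx).
  assert (HF := F0_pos q m x Hq Hx).
  assert (Hs := s_bounds q m x 0 Hq Hx). simpl in Hs. rewrite Rmult_1_r in Hs.
  assert (HE0 : 1 <= Eu q (x / q ^ m)) by (apply Eu_ge1; auto).
  replace (q ^ 0) with 1 by reflexivity. rewrite !Rmult_1_r.
  replace (1 + m)%nat with (S m) by lia.
  replace (Eu q (x / q ^ m)) with (Eu q (x / q ^ m * q ^ S m) / ((1 - x / q ^ m) * qpoch (q * x / q ^ m) q m))
    by (rewrite <- HE; field; split; lra).
  replace (q / q ^ S m) with (/ q ^ m) by (simpl; field; split; [apply pow_nonzero|]; lra).
  replace (q / 1) with q by field.
  assert (Hec := ec_rho q m m (proj1 Hq)).
  assert (Hqf := qf_nz q m Hq).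
  replace (ec q m m) with (qpoch (/ q ^ m) q m * (q ^ m) ^ m / qpoch q q m) by (rewrite <- Hec; field; auto).
  rewrite Pm_val by auto.
  rewrite pow_div by (apply pow_nonzero; lra).
  rewrite Rpow_mult_distr, pow_div by (apply pow_nonzero; lra).
  change (q ^ S m) with (q * q ^ m). rewrite Rpow_mult_distr.
  rewrite Qm_val.
  assert (q ^ m <> 0) by (apply pow_nonzero; lra).
  assert (q ^ binom2 m <> 0) by (apply pow_nonzero; lra).
  assert (x ^ m <> 0) by (apply pow_nonzero; lra).
  destruct (sign_cases m) as [Hsg | Hsg]; rewrite Hsg; field; repeat split; try lra; auto.
Qed.

Lemma Nqm_val q m lam : 0 < q < 1 -> 0 < (1 - q) * lam < q ^ m ->
  Nqm q m lam = qpoch (q * ((1 - q) * lam) / q ^ m) q m * Eu q ((1 - q) * lam / q ^ m) / q ^ m.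
Proof.
  intros Hq Hx. unfold Nqm.
  assert (Hs := s_bounds q m ((1 - q) * lam) 0 Hq Hx). simpl in Hs. rewrite Rmult_1_r in Hs.
  assert (q ^ m <> 0) by (apply pow_nonzero; lra).
  replace (/ q ^ m * (1 - q) * lam) with ((1 - q) * lam / q ^ m) by (field; auto).
  replace (q / q ^ m * (1 - q) * lam) with (q * ((1 - q) * lam) / q ^ m) by (field; auto).
  rewrite qpoch_inf_Eu by auto.
  assert (1 <= Eu q ((1 - q) * lam / q ^ m)) by (apply Eu_ge1; auto).
  field. split; auto; lra.
Qed.

Lemma K0 q m lam : 0 < q < 1 -> 0 < (1 - q) * lam < q ^ m ->
  q ^ (2 * binom2 m) / (Nqm q m lam * ((1 - q) * lam) ^ m * qpoch q q m) *
  (fc q m ((1 - q) * lam) 0 * Mo q m ((1 - q) * lam) ((1 - q) * lam / q ^ m) 0) = 1.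
Proof.
  intros Hq Hx. rewrite Nqm_val by auto. set (x := (1 - q) * lam) in *.
  unfold Mo. rewrite F0_val by (auto; lra). rewrite Gm_at by (auto; lra).
  replace (q ^ 0) with 1 by reflexivity. rewrite !Rmult_1_r.
  replace (q / 1) with q by field.
  assert (HF := F0_pos q m x Hq Hx).
  assert (Hs := s_bounds q m x 0 Hq Hx). simpl in Hs. rewrite Rmult_1_r in Hs.
  assert (HE0 : 1 <= Eu q (x / q ^ m)) by (apply Eu_ge1; auto).
  assert (Hqf := qf_nz q m Hq).
  rewrite pow_div by (apply pow_nonzero; lra). rewrite Qm_val.
  replace (2 * binom2 m)%nat with (binom2 m + binom2 m)%nat by lia. rewrite pow_add.
  assert (q ^ m <> 0) by (apply pow_nonzero; lra).
  assert (q ^ binom2 m <> 0) by (apply pow_nonzero; lra).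
  assert (x ^ m <> 0) by (apply pow_nonzero; lra).
  field. repeat split; try lra; auto.
Qed.

Lemma K2 q m x : 0 < q < 1 -> 0 < x < q ^ m ->
  Mo q m x (x / q ^ m) (2 + m) = (1 - x * q) * qnum q (S m) * Mo q m x (x / q ^ m) (1 + m).
Proof.
  intros Hq Hx. unfold Mo. rewrite !Gm_at by (auto; lra).
  assert (Hs1 := s_bounds q m x (1 + m) Hq Hx).
  assert (Hqm : q ^ m <> 0) by (apply pow_nonzero; lra).
  assert (E1 : x / q ^ m * q ^ (2 + m) = q * (x / q ^ m * q ^ (1 + m))) by (simpl; ring).
  rewrite E1, Eu_func by auto.
  replace (x / q ^ m * q ^ (1 + m)) with (x * q) by (simpl; field; auto).
  replace (q / q ^ (2 + m)) with (/ q ^ (S m)) by (simpl; field; split; auto; lra).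
  replace (q / q ^ (1 + m)) with (/ q ^ m) by (simpl; field; split; auto; lra).
  rewrite Pm_val by auto.
  assert (H := Kq q 0 (S m) Hq).
  change (qpoch q q 0) with 1 in H. change (binom2 0) with 0%nat in H. change (0 + S m)%nat with (S m) in H.
  assert (H2 : qpoch (/ q ^ (S m)) q (S m) = qpoch (/ q ^ (S m)) q m * (1 - / q ^ (S m) * q ^ m)) by reflexivity.
  rewrite H2, binom2_S in H.
  assert (Hfac : 1 - / q ^ (S m) * q ^ m = 1 - / q) by (simpl; field; split; auto; lra).
  rewrite Hfac in H.
  assert (Hbm : q ^ binom2 m <> 0) by (apply pow_nonzero; lra).
  assert (Hqf := qf_nz q m Hq).
  assert (Hiq : 1 - / q <> 0).
  { assert (1 < / q). { rewrite <- Rinv_1. apply Rinv_lt_contravar; lra. } lra. }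
  assert (HqS : q ^ S m <> 0) by (apply pow_nonzero; lra).
  assert (Hqb : q ^ (binom2 m + m) <> 0) by (apply pow_nonzero; lra).
  assert (HP' : qpoch (/ q ^ S m) q m = (-1) ^ (S m) * q ^ 0 * qpoch q q (S m) / ((1 - / q) * q ^ (S m) * q ^ (binom2 m + m) * 1)).
  { rewrite <- H. field. repeat split; auto; lra. }
  rewrite HP'. unfold qnum. rewrite pow_add. simpl.
  assert (Hqm1 : q ^ m <= 1) by (apply pow_le1; lra).
  assert (HE : 1 <= Eu q (x * q)) by (apply Eu_ge1; auto; split; nra).
  rewrite !Rpow_mult_distr.
  assert ((q ^ m) ^ m <> 0) by (apply pow_nonzero; auto).
  field. repeat split; auto; try lra.
Qed.


Lemma K3 q m x : 0 < q < 1 ->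
  fc q (S m) x m = - (1 - x) * qnum q (S m) * fc q (S m) x (S m).
Proof.
  intros Hq. rewrite fc_sub, fc_top by auto.
  assert (Hd := ec_diag q m). assert (Hs := ec_sub q m Hq).
  assert (Hqm : q ^ m <> 0) by (apply pow_nonzero; lra).
  assert (He : ec q (S m) m = qnum q (S m) * ec q m m).
  { apply (Rmult_eq_reg_r (q ^ m)); auto. rewrite Hs, Hd. ring. }
  rewrite He, Hd.
  unfold beta. change (qpoch (/ q ^ S m) q 1) with (1 * (1 - / q ^ S m * q ^ 0)).
  change (qpoch q q 1) with (1 * (1 - q * q ^ 0)).
  replace (q / q ^ S m) with (/ q ^ m) by (simpl; field; split; auto; lra).
  replace (q ^ 2 / q ^ S m) with (q * / q ^ m) by (simpl; field; split; auto; lra).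
  rewrite (Rpow_mult_distr q (/ q ^ m) m). change ((/ q ^ m) ^ S m) with (/ q ^ m * (/ q ^ m) ^ m).
  assert ((/ q ^ m) ^ m <> 0) by (apply pow_nonzero; apply Rinv_neq_0_compat; auto).
  set (c := (/ q ^ m) ^ m) in *.
  unfold qnum. simpl.
  field. repeat split; auto; lra.
Qed.

Ltac toR := match goal with |- ?a = ?b => change (@eq R a b) end.

Lemma L2_val q m x : 0 < q < 1 -> 0 < x < q ^ m ->
  sum_f_R0 (fun i => fc q m x i * Mo q m x (x / q ^ m) (2 + i)) m =
  ((1 - x * q) * qnum q (S m) - (1 - x) * qnum q m) * (fc q m x m * Mo q m x (x / q ^ m) (1 + m)).
Proof.
  intros Hq Hx. destruct m as [|m].
  - simpl. rewrite K2 by auto. unfold qnum. simpl. field. lra.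
  - rewrite L2_eval by (auto; lra). rewrite K3 by auto.
    replace (2 + S m)%nat with (2 + S m)%nat by reflexivity.
    rewrite K2 by auto. replace (2 + m)%nat with (1 + S m)%nat by lia. ring.
Qed.

Theorem main (q : R) (m : nat) (lam : R) :
  0 < q < 1 ->
  0 < lam < q ^ m / (1 - q) ->
  is_series (fun j => qnum q j * pj lam q m j) (lam + qnum q m) /\
  is_series (fun j => (qnum q j - (lam + qnum q m)) ^ 2 * pj lam q m j)
    (lam ^ 2 * q ^ m * (1 + q - 2 / q ^ m)
     + lam * q ^ m * (2 * qnum q m + q ^ m)).
Proof.
  intros Hq Hl.
  assert (Hqm : 0 < q ^ m) by (apply pow_pos'; lra).
  assert (Hx : 0 < (1 - q) * lam < q ^ m).
  { split. apply Rmult_lt_0_compat; lra.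
    destruct Hl as [_ Hl]. apply (Rmult_lt_compat_l (1 - q)) in Hl; [|lra].
    replace ((1 - q) * (q ^ m / (1 - q))) with (q ^ m) in Hl by (field; lra). exact Hl. }
  assert (HN : Nqm q m lam <> 0).
  { rewrite Nqm_val by auto. assert (H1 := F0_pos q m _ Hq Hx).
    assert (Hs := s_bounds q m ((1 - q) * lam) 0 Hq Hx). simpl in Hs. rewrite Rmult_1_r in Hs.
    assert (1 <= Eu q ((1 - q) * lam / q ^ m)) by (apply Eu_ge1; auto).
    apply Rgt_not_eq. apply Rdiv_lt_0_compat; auto. apply Rmult_lt_0_compat; lra. }
  assert (HK0 := K0 q m lam Hq Hx).
  set (x := (1 - q) * lam) in *.
  set (s := x / q ^ m) in *.
  set (C := q ^ (2 * binom2 m) / (Nqm q m lam * x ^ m * qpoch q q m)) in *.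
  set (T := fun p j => (q ^ p) ^ j * Phi q m x (q ^ j) ^ 2 * s ^ j / qpoch q q j).
  assert (Hpj : forall j, pj lam q m j = C * T 0%nat j).
  { intros j. rewrite pj_form by (auto; lra). unfold T, C. simpl. fold x s. rewrite pow1. unfold Rdiv. ring. }
  assert (Hs : 0 < s < 1).
  { assert (H := s_bounds q m x 0 Hq Hx). simpl in H. rewrite Rmult_1_r in H. exact H. }
  assert (HT0 := moment q m x s 0 Hq Hs).
  assert (HT1 := moment q m x s 1 Hq Hs).
  assert (HT2 := moment q m x s 2 Hq Hs).
  unfold s in HT0, HT1, HT2.
  rewrite L0_eval in HT0 by (auto; lra).
  rewrite L1_eval, K1 in HT1 by (auto; lra).
  rewrite L2_val, K1 in HT2 by (auto; lra).
  fold s in HT0, HT1, HT2.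
  set (L0 := fc q m x 0 * Mo q m x s 0) in *.
  fold (T 0%nat) in HT0. fold (T 1%nat) in HT1. fold (T 2%nat) in HT2.
  assert (Hq1 : 1 - q <> 0) by lra.
  split.
  - eapply is_series_eq; [| eapply isR_ext; [| apply (isR_scal _ _ (C / (1 - q)) (isR_plus _ _ _ _ HT0 (isR_scal _ _ (-1) HT1)))]].
    + replace (lam) with (x / (1 - q)) by (unfold x; field; auto).
      replace (C / (1 - q) * (L0 + -1 * ((q ^ m - x) * L0))) with ((C * L0) * (1 - (q ^ m - x)) / (1 - q)) by (field; auto). rewrite HK0. unfold qnum. toR. field. auto.
    + intros j. rewrite Hpj. unfold T, qnum. rewrite pow_O, pow_1, pow1. assert (Hqj := qf_nz q j Hq). toR. field. auto.
  - set (w := q ^ m - x).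
    set (RR := (1 - x * q) * qnum q (S m) - (1 - x) * qnum q m) in *.
    eapply is_series_eq; [| eapply isR_ext; [| apply (isR_scal _ _ (C / (1 - q) ^ 2)
       (isR_plus _ _ _ _ (isR_plus _ _ _ _ (isR_scal _ _ (w ^ 2) HT0) (isR_scal _ _ (-2 * w) HT1)) HT2))]].
    + replace (C / (1 - q) ^ 2 * (w ^ 2 * L0 + -2 * w * ((q ^ m - x) * L0) + RR * ((q ^ m - x) * L0)))
        with ((C * L0) * (w * (RR - w)) / (1 - q) ^ 2) by (unfold w; toR; field; auto).
      rewrite HK0. unfold w, RR, qnum.
      replace lam with (x / (1 - q)) by (unfold x; field; auto).
      simpl pow.
      toR. field. split; lra.
    + intros j. rewrite Hpj. unfold T, qnum. rewrite pow_O, pow_1, pow1.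
      rewrite <- pow_mult, Nat.mul_comm, pow_mult.
      replace lam with (x / (1 - q)) by (unfold x; field; auto).
      unfold w. assert (Hqj := qf_nz q j Hq).
      toR. field. auto.
Qed.

Theorem proposition5p1 (q : R) (m : nat) (lam : R) :
  0 < q < 1 ->
  0 < lam < q ^ m / (1 - q) ->
  is_series (fun j => qnum q j * pj lam q m j) (lam + qnum q m) /\
  is_series (fun j => (qnum q j - (lam + qnum q m)) ^ 2 * pj lam q m j)
    (lam ^ 2 * q ^ m * (1 + q - 2 / q ^ m)
     + lam * q ^ m * (2 * qnum q m + q ^ m)).
Proof.
  exact (main q m lam).
Qed.
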